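(* Consider the single sampling experiment with inputs $p_A,q_A,p_B,q_B$ and $\Delta>0$, and let $B=\mathrm{Bad}_\Delta(\tau,\nu_A)\cup\mathrm{Bad}_\Delta(\tau,\nu_B)$ and $\gamma=\tau(B)$. Then: 1. Alice accepts with probability exactly $\frac{1}{|\mathcal{U}|2^\Delta}$, and so does Bob. 2. The probability that the experiment is accepted is at most $\frac{1}{|\mathcal{U}|2^{2\Delta}}$ and at least $\frac{1-\gamma}{|\mathcal{U}|2^{2\Delta}}$. 3. If the experiment is accepted with positive probability and $\tau'$ denotes the distribution of its output conditioned on it being accepted, then $|\tau-\tau'|\le\gamma$.
   Context: $\mathcal{U}$ is a finite set and $p_A,q_A,p_B,q_B:\mathcal{U}\to[0,1]$ are such that $\tau=p_Ap_B$, $\nu_A=p_Aq_A$, $\nu_B=p_Bq_B$ (pointwise products) are probability distributions on $\mathcal{U}$. Single sampling experiment with parameter $\Delta>0$: using shared randomness, sample $u$ uniformly from $\mathcal{U}$ and $\alpha,\beta$ independently and uniformly from $[0,2^\Delta]$. Alice accepts if $\alpha\le p_A(u)$ and $\beta\le2^\Delta q_A(u)$. Bob accepts if $\alpha\le2^\Delta q_B(u)$ and $\beta\le p_B(u)$. If both accept, the experiment is accepted and its output is $u$; otherwise the output is $\bot$. For distributions $\tau,\nu$ on $\mathcal{U}$, $\mathrm{Bad}_\Delta(\tau,\nu)=\{u\in\mathcal{U}: 2^\Delta\nu(u)<\tau(u)\}$. Statistical distance: $|\mu-\nu|=\max_{T\subseteq\mathcal{U}}(\mu(T)-\nu(T))$.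 *)

(* Defs.v *)
From Stdlib Require Import Reals List.
Import ListNotations.
Open Scope R_scope.

(* A finite set U is represented by a type together with a duplicate-free
   list enumerating all of its elements. *)
Definition is_enum {U : Type} (en : list U) : Prop :=
  NoDup en /\ forall u, In u en.

Definition mass {U : Type} (f : U -> R) (T : list U) : R :=
  fold_right (fun u acc => f u + acc) 0 T.

Definition is_distr {U : Type} (en : list U) (d : U -> R) : Prop :=
  (forall u, 0 <= d u) /\ mass d en = 1.

Definition pw {U : Type} (f g : U -> R) : U -> R := fun u => f u * g u.

Definition Bad {U : Type} (Delta : R) (tau nu : U -> R) (u : U) : Prop :=
  Rpower 2 Delta * nu u < tau u.

Definition mass_bad {U : Type} (en : list U) (Delta : R) (tau nuA nuB : U -> R) : R :=
  mass (fun u => if Rlt_dec (Rpower 2 Delta * nuA u) (tau u) then tau u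
                 else if Rlt_dec (Rpower 2 Delta * nuB u) (tau u) then tau u
                 else 0) en.

Fixpoint sublists {A : Type} (l : list A) : list (list A) :=
  match l with
  | [] => [[]]
  | x :: t => let s := sublists t in s ++ map (cons x) s
  end.

Definition stat_dist {U : Type} (en : list U) (mu nu : U -> R) : R :=
  fold_right Rmax 0 (map (fun T => mass mu T - mass nu T) (sublists en)).

(* ---- The single sampling experiment ----
   alpha, beta are independent and uniform on [0, L] with L = 2^Delta.
   Every acceptance event considered is of the form
     "alpha <= c for all c in ca  and  beta <= d for all d in cb".
   For alpha uniform on [0,L], Pr[alpha <= c for all c in cs] is the length of
   [0,L] intersected with (-oo, min cs], divided by L. *)
Definition unif_le_all (L : R) (cs : list R) : R :=
  Rmax 0 (fold_right Rmin L cs) / L.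

(* probability of the rectangle event, by independence of alpha and beta *)
Definition rect_prob (L : R) (ca cb : list R) : R :=
  unif_le_all L ca * unif_le_all L cb.

(* probability of an event (given, for each u, by its constraints on alpha and
   beta) when u is uniform on U and alpha, beta uniform on [0, 2^Delta] *)
Definition exp_prob {U : Type} (en : list U) (Delta : R)
  (ca cb : U -> list R) : R :=
  mass (fun u => / INR (length en) * rect_prob (Rpower 2 Delta) (ca u) (cb u)) en.

Definition alice_a {U : Type} (Delta : R) (pA qA : U -> R) (u : U) : list R := [pA u].
Definition alice_b {U : Type} (Delta : R) (pA qA : U -> R) (u : U) : list R :=
  [Rpower 2 Delta * qA u].
Definition bob_a {U : Type} (Delta : R) (pB qB : U -> R) (u : U) : list R :=
  [Rpower 2 Delta * qB u].
Definition bob_b {U : Type} (Delta : R) (pB qB : U -> R) (u : U) : list R := [pB u].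

Definition prob_alice {U : Type} (en : list U) (Delta : R) (pA qA : U -> R) : R :=
  exp_prob en Delta (alice_a Delta pA qA) (alice_b Delta pA qA).
Definition prob_bob {U : Type} (en : list U) (Delta : R) (pB qB : U -> R) : R :=
  exp_prob en Delta (bob_a Delta pB qB) (bob_b Delta pB qB).

Definition both_a {U : Type} (Delta : R) (pA qA pB qB : U -> R) (u : U) : list R :=
  alice_a Delta pA qA u ++ bob_a Delta pB qB u.
Definition both_b {U : Type} (Delta : R) (pA qA pB qB : U -> R) (u : U) : list R :=
  alice_b Delta pA qA u ++ bob_b Delta pB qB u.

Definition prob_accept {U : Type} (en : list U) (Delta : R) (pA qA pB qB : U -> R) : R :=
  exp_prob en Delta (both_a Delta pA qA pB qB) (both_b Delta pA qA pB qB).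

(* Pr[experiment accepted and output = u0] *)
Definition prob_output {U : Type} (en : list U) (Delta : R) (pA qA pB qB : U -> R)
  (u0 : U) : R :=
  / INR (length en) *
  rect_prob (Rpower 2 Delta) (both_a Delta pA qA pB qB u0) (both_b Delta pA qA pB qB u0).

Definition tau_cond {U : Type} (en : list U) (Delta : R) (pA qA pB qB : U -> R)
  (u0 : U) : R :=
  prob_output en Delta pA qA pB qB u0 / prob_accept en Delta pA qA pB qB.

(* Main.v *)
Require Import Defs.
From Stdlib Require Import Reals List Lra Psatz.
Import ListNotations.
Open Scope R_scope.

Lemma mass_ext {U} (f g : U -> R) T : (forall u, f u = g u) -> mass f T = mass g T.
Proof. intros H; induction T; simpl; [reflexivity| rewrite H, IHT; reflexivity]. Qed.

Lemma mass_scal {U} (c : R) (f : U -> R) T : mass (fun u => c * f u) T = c * mass f T.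
Proof. induction T; simpl; [ring| rewrite IHT; ring]. Qed.

Lemma mass_minus {U} (f g : U -> R) T : mass (fun u => f u - g u) T = mass f T - mass g T.
Proof. induction T; simpl; [ring| rewrite IHT; ring]. Qed.

Lemma mass_le {U} (f g : U -> R) T : (forall u, f u <= g u) -> mass f T <= mass g T.
Proof. intros H; induction T; simpl; [lra| specialize (H a); lra]. Qed.

Lemma mass_nonneg {U} (f : U -> R) T : (forall u, 0 <= f u) -> 0 <= mass f T.
Proof. intros H; induction T; simpl; [lra| specialize (H a); lra]. Qed.

Lemma mass_sub {U} (f : U -> R) (en T : list U) : (forall u, 0 <= f u) ->
  In T (sublists en) -> mass f T <= mass f en.
Proof.
  intros H; revert T; induction en as [|x t IH]; intros T HT; simpl in HT.
  - destruct HT as [<-|[]]; simpl; lra.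
  - apply in_app_or in HT; destruct HT as [HT|HT].
    + pose proof (IH T HT); simpl; specialize (H x); lra.
    + apply in_map_iff in HT; destruct HT as [T' [<- HT']].
      pose proof (IH T' HT'); simpl; lra.
Qed.

Lemma rmax_list (l : list R) c : 0 <= c -> (forall x, In x l -> x <= c) ->
  fold_right Rmax 0 l <= c.
Proof.
  induction l; intros H0 H; simpl; [lra|].
  apply Rmax_lub; [apply H; left; auto| apply IHl; auto; intros; apply H; right; auto].
Qed.

Lemma rect_alice L x y : 1 < L -> 0 <= x <= 1 -> 0 <= y <= 1 ->
  rect_prob L [x] [L*y] = x*y/L.
Proof.
  intros HL Hx Hy; unfold rect_prob, unif_le_all; simpl.
  rewrite (Rmin_left x L) by lra. rewrite (Rmin_left (L*y) L) by nra.
  rewrite (Rmax_right 0 x) by lra. rewrite (Rmax_right 0 (L*y)) by nra. field; lra.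
Qed.

Lemma rect_bob L x y : 1 < L -> 0 <= x <= 1 -> 0 <= y <= 1 ->
  rect_prob L [L*y] [x] = x*y/L.
Proof.
  intros HL Hx Hy; unfold rect_prob, unif_le_all; simpl.
  rewrite (Rmin_left x L) by lra. rewrite (Rmin_left (L*y) L) by nra.
  rewrite (Rmax_right 0 x) by lra. rewrite (Rmax_right 0 (L*y)) by nra. field; lra.
Qed.

Lemma rect_both L x1 y1 x2 y2 : 1 < L -> 0 <= x1 <= 1 -> 0 <= y1 <= 1 ->
  0 <= x2 <= 1 -> 0 <= y2 <= 1 ->
  rect_prob L [x1; L*y2] [L*y1; x2] = Rmin x1 (L*y2) * Rmin (L*y1) x2 / (L*L).
Proof.
  intros HL H1 H2 H3 H4; unfold rect_prob, unif_le_all; simpl.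
  rewrite (Rmin_left (L*y2) L) by nra. rewrite (Rmin_left x2 L) by lra.
  rewrite (Rmax_right 0 (Rmin x1 (L*y2))) by (apply Rmin_glb; nra).
  rewrite (Rmax_right 0 (Rmin (L*y1) x2)) by (apply Rmin_glb; nra).
  field; lra.
Qed.

Theorem claim4p1 (U : Type) (en : list U) (pA qA pB qB : U -> R) (Delta : R) :
  is_enum en ->
  (forall u, 0 <= pA u <= 1) -> (forall u, 0 <= qA u <= 1) ->
  (forall u, 0 <= pB u <= 1) -> (forall u, 0 <= qB u <= 1) ->
  is_distr en (pw pA pB) -> is_distr en (pw pA qA) -> is_distr en (pw pB qB) ->
  0 < Delta ->
  let gamma := mass_bad en Delta (pw pA pB) (pw pA qA) (pw pB qB) in
  let N := INR (length en) in
  (prob_alice en Delta pA qA = 1 / (N * Rpower 2 Delta) /\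
   prob_bob en Delta pB qB = 1 / (N * Rpower 2 Delta)) /\
  (prob_accept en Delta pA qA pB qB <= 1 / (N * Rpower 2 (2 * Delta)) /\
   (1 - gamma) / (N * Rpower 2 (2 * Delta)) <= prob_accept en Delta pA qA pB qB) /\
  (0 < prob_accept en Delta pA qA pB qB ->
   stat_dist en (pw pA pB) (tau_cond en Delta pA qA pB qB) <= gamma).
Proof.
  intros Hen HpA HqA HpB HqB [Htau0 Htau1] [HnA0 HnA1] [HnB0 HnB1] HD gamma N.
  assert (HL : 1 < Rpower 2 Delta).
  { rewrite <- (Rpower_O 2) by lra. apply Rpower_lt; lra. }
  assert (H2L : Rpower 2 (2 * Delta) = Rpower 2 Delta * Rpower 2 Delta).
  { replace (2 * Delta) with (Delta + Delta) by ring. apply Rpower_plus. }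
  rewrite H2L.
  assert (HN : 0 < N).
  { unfold N. apply lt_0_INR. destruct en; simpl in *; [lra| lia]. }
  unfold gamma, mass_bad in *. unfold tau_cond, prob_output, prob_accept, prob_alice, prob_bob,
    exp_prob, both_a, both_b, alice_a, alice_b, bob_a, bob_b in *.
  clear gamma H2L. fold N.
  set (L := Rpower 2 Delta) in *.
  simpl app.
  set (g := fun u => Rmin (pA u) (L * qB u) * Rmin (L * qA u) (pB u)).
  set (bad := fun u => if Rlt_dec (L * pw pA qA u) (pw pA pB u) then pw pA pB u
        else if Rlt_dec (L * pw pB qB u) (pw pA pB u) then pw pA pB u else 0).
  assert (Hg0 : forall u, 0 <= g u).
  { intro u; unfold g; specialize (HpA u); specialize (HqA u); specialize (HpB u);
    specialize (HqB u). apply Rmult_le_pos; apply Rmin_glb; nra. }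
  assert (Hgt : forall u, g u <= pw pA pB u).
  { intro u; unfold g, pw; specialize (HpA u); specialize (HpB u); specialize (HqA u); specialize (HqB u).
    apply Rmult_le_compat; try (apply Rmin_glb; nra).
    apply Rmin_l. apply Rmin_r. }
  assert (Hgb : forall u, pw pA pB u - bad u <= g u).
  { intro u; specialize (Hg0 u). unfold bad.
    destruct (Rlt_dec _ _); [lra|]. destruct (Rlt_dec _ _); [lra|].
    unfold g, pw in *; specialize (HpA u); specialize (HqA u); specialize (HpB u);
    specialize (HqB u).
    assert (h1 : pB u = 0 \/ pA u <= L * qB u).
    { destruct (Req_dec (pB u) 0); [left; auto| right; nra]. }
    assert (h2 : pA u = 0 \/ pB u <= L * qA u).
    { destruct (Req_dec (pA u) 0); [left; auto| right; nra]. }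
    destruct h1 as [h1|h1]; [assert (pA u * pB u = 0) by (rewrite h1; ring); lra|].
    destruct h2 as [h2|h2]; [assert (pA u * pB u = 0) by (rewrite h2; ring); lra|].
    rewrite Rmin_left by exact h1. rewrite Rmin_right by exact h2. lra. }
  assert (Hbad0 : forall u, 0 <= bad u).
  { intro u; unfold bad; destruct (Rlt_dec _ _); [apply Htau0|];
    destruct (Rlt_dec _ _); [apply Htau0| lra]. }
  assert (Hacc : mass (fun u => / N * rect_prob L [pA u; L * qB u] [L * qA u; pB u]) en
                 = mass g en / (N * (L * L))).
  { rewrite (mass_ext _ (fun u => (/ (N * (L*L))) * g u)).
    - rewrite mass_scal. field; lra.
    - intro u. rewrite rect_both by (try lra; auto). unfold g. field; lra. }
  rewrite Hacc.
  assert (HG1 : mass g en <= 1).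
  { rewrite <- Htau1. apply mass_le; auto. }
  assert (HGg : 1 - mass bad en <= mass g en).
  { rewrite <- Htau1, <- mass_minus. apply mass_le; auto. }
  assert (HNL : 0 < N * (L * L)) by (apply Rmult_lt_0_compat; nra).
  split; [|split; [split|]].
  - split.
    + rewrite (mass_ext _ (fun u => (/ (N * L)) * pw pA qA u)).
      * rewrite mass_scal, HnA1. field; lra.
      * intro u. rewrite rect_alice by (try lra; auto). unfold pw. field; lra.
    + rewrite (mass_ext _ (fun u => (/ (N * L)) * pw pB qB u)).
      * rewrite mass_scal, HnB1. field; lra.
      * intro u. rewrite rect_bob by (try lra; auto). unfold pw. field; lra.
  - unfold Rdiv; apply Rmult_le_compat_r; [left; apply Rinv_0_lt_compat; lra| lra].
  - unfold Rdiv; apply Rmult_le_compat_r; [left; apply Rinv_0_lt_compat; lra| ].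
    fold bad. lra.
  - intros Hpos. fold bad.
    assert (HG : 0 < mass g en).
    { unfold Rdiv in Hpos. apply Rmult_lt_reg_r with (/ (N * (L*L))).
      apply Rinv_0_lt_compat; lra. lra. }
    unfold stat_dist. apply rmax_list.
    { apply mass_nonneg; auto. }
    intros x Hx. apply in_map_iff in Hx. destruct Hx as [T [<- HT]].
    match goal with |- _ - mass ?f T <= _ => rewrite (mass_ext f (fun u => / mass g en * g u)); [| intro u; rewrite rect_both by (try lra; auto); change (Rmin (pA u) (L * qB u) * Rmin (L * qA u) (pB u)) with (g u); field; repeat split; lra] end.
    rewrite mass_scal.
    assert (mass g T <= / mass g en * mass g T).
    { rewrite <- (Rmult_1_l (mass g T)) at 1. apply Rmult_le_compat_r.
      apply mass_nonneg; auto.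
      rewrite <- Rinv_1. apply Rinv_le_contravar; lra. }
    assert (mass (pw pA pB) T - mass g T <= mass bad T).
    { rewrite <- mass_minus. apply mass_le. intro u; specialize (Hgb u); lra. }
    pose proof (mass_sub bad en T Hbad0 HT). lra.
Qed.
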